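(* Let $g$ be a function from strict partitions to $\mathbb{C}$ and let $\mu$ be a strict partition. Then for every $n\ge0$, $$\sum_{|\lambda/\mu|=n}2^{|\lambda|-|\mu|-\ell(\lambda)+\ell(\mu)}f_{\lambda/\mu}\,g(\lambda)=\sum_{k=0}^n\binom{n}{k}D^kg(\mu)$$ and $$D^ng(\mu)=\sum_{k=0}^n(-1)^{n+k}\binom{n}{k}\sum_{|\lambda/\mu|=k}2^{|\lambda|-|\mu|-\ell(\lambda)+\ell(\mu)}f_{\lambda/\mu}\,g(\lambda),$$ where $\sum_{|\lambda/\mu|=k}$ ranges over strict partitions $\lambda\supseteq\mu$ with $|\lambda|-|\mu|=k$. In particular, if there is a positive integer $r$ such that $D^rg(\lambda)=0$ for every strict partition $\lambda$, then the left-hand side of the first identity is a polynomial in $n$ of degree at most $r-1$.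
   Context: A strict partition is a finite strictly decreasing sequence of positive integers $\lambda=(\lambda_1>\cdots>\lambda_\ell)$ (the empty sequence is allowed); $|\lambda|=\sum_i\lambda_i$, $\ell(\lambda)=\ell$, and $\lambda_i=0$ for $i>\ell(\lambda)$. The (shifted Young) diagram of $\lambda$ is the set of boxes $(i,j)$ with $1\le i\le\ell(\lambda)$, $i+1\le j\le i+\lambda_i$; $\lambda$ is identified with its diagram. Write $\lambda\supseteq\mu$ if $\lambda_i\ge\mu_i$ for all $i$; $\lambda/\mu$ is the set of boxes of $\lambda$ not in $\mu$, and $|\lambda/\mu|=|\lambda|-|\mu|$. $f_{\lambda/\mu}$ is the number of standard shifted Young tableaux of shape $\lambda/\mu$, i.e. bijective fillings of the boxes of $\lambda/\mu$ with $1,\dots,|\lambda/\mu|$ increasing from left to right along rows and from top to bottom along columns ($f_{\mu/\mu}=1$). For a strict partition $\lambda$, $\lambda^+$ denotes any strict partition obtained from $\lambda$ by adding one box. The difference operator is $$Dg(\lambda)=\sum_{\lambda^+:\ \ell(\lambda^+)>\ell(\lambda)}g(\lambda^+)+2\sum_{\lambda^+:\ \ell(\lambda^+)=\ell(\lambda)}g(\lambda^+)-g(\lambda),$$ and $D^k$ is its $k$-th iterate ($D^0g=g$). *)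

(* Defs.v *)
From mathcomp Require Import all_boot all_order all_algebra.
From mathcomp Require Import complex.
From mathcomp Require Import Rstruct.
Import ComplexField.
Set Implicit Arguments. Unset Strict Implicit. Unset Printing Implicit Defensive.
Import Order.TTheory GRing.Theory Num.Theory.
Local Open Scope ring_scope.

Notation C := (complex Rdefinitions.R).

(* A strict partition is represented by the sequence of its parts
   [:: l_1; ...; l_ell], strictly decreasing and positive. *)
Definition strict (l : seq nat) : bool :=
  sorted (fun a b : nat => b < a)%N l && all (fun x : nat => 0 < x)%N l.

Definition psize (l : seq nat) : nat := sumn l.
Definition plen (l : seq nat) : nat := size l.

(* lambda_i with lambda_i = 0 for i > ell(lambda); indices are 0-based. *)
Definition part (l : seq nat) (i : nat) : nat := nth 0%N l i.

Definition contains (l m : seq nat) : bool :=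
  all (fun i => part m i <= part l i)%N (iota 0 (maxn (size l) (size m))).

(* Boxes of the shifted diagram: (i,j), 1 <= i <= ell, i+1 <= j <= i+l_i. *)
Definition boxes (l : seq nat) : seq (nat * nat) :=
  flatten [seq [seq (i.+1, j) | j <- iota (i.+2) (part l i)] | i <- iota 0 (size l)].

Definition skew_boxes (l m : seq nat) : seq (nat * nat) :=
  [seq b <- boxes l | b \notin boxes m].

(* An ordering s of the boxes of lambda/mu encodes the bijective filling
   b |-> index b s + 1.  It is standard iff entries increase left to right
   along rows and top to bottom along columns. *)
Definition standard_order (s : seq (nat * nat)) : bool :=
  all (fun b => all (fun b' =>
        (((b.1 == b'.1) && (b.2 < b'.2)%N) || ((b.2 == b'.2) && (b.1 < b'.1)%N))
          ==> (index b s < index b' s)%N) s) s.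

Definition nsyt (l m : seq nat) : nat :=
  count standard_order (permutations (skew_boxes l m)).

Fixpoint sp_bounded (m N : nat) : seq (seq nat) :=
  match m with
  | 0 => if N == 0%N then [:: [::]] else [::]
  | m'.+1 => sp_bounded m' N ++
             (if (m'.+1 <= N)%N then [seq m'.+1 :: s | s <- sp_bounded m' (N - m'.+1)]
              else [::])
  end.

Definition strict_parts (N : nat) : seq (seq nat) := sp_bounded N N.

(* All strict partitions lambda^+ obtained from lambda by adding one box:
   add a box at the end of row i (i = ell(lambda) meaning a new row of
   length 1), keeping those results that are strict partitions. *)
Definition add_box (l : seq nat) : seq (seq nat) :=
  [seq l' <- [seq incr_nth l i | i <- iota 0 (size l).+1] | strict l'].

Definition Dop (g : seq nat -> C) (l : seq nat) : C :=
  \sum_(l' <- add_box l | (size l < size l')%N) g l'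
  + 2%:R * \sum_(l' <- add_box l | size l' == size l) g l'
  - g l.

Definition Dpow (k : nat) (g : seq nat -> C) : seq nat -> C := iter k Dop g.

Definition weight (l m : seq nat) : int :=
  (psize l)%:Z - (psize m)%:Z - (plen l)%:Z + (plen m)%:Z.

Definition Ssum (g : seq nat -> C) (m : seq nat) (n : nat) : C :=
  \sum_(l <- strict_parts (psize m + n) | contains l m)
     (2%:R : C) ^ (weight l m) * (nsyt l m)%:R * g l.

(* Main.v *)
Require Import Defs.
From mathcomp Require Import all_boot all_order all_algebra.
From mathcomp Require Import complex Rstruct.
From mathcomp Require Import zify ring.
From Stdlib Require Import FunctionalExtensionality.
Import ComplexField.
Import Order.TTheory GRing.Theory Num.Theory.
Set Implicit Arguments. Unset Strict Implicit. Unset Printing Implicit Defensive.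

Lemma strict_cons x t : strict (x :: t) = (part t 0 < x)%N && strict t.
Proof.
case: t => [|y t]; rewrite /strict /= ?andbT //.
case: (ltnP y x) => //= yx.
by rewrite (leq_ltn_trans (leq0n y) yx).
Qed.

Lemma strictP l : reflect (forall i, (i < size l)%N -> (part l i.+1 < part l i)%N) (strict l).
Proof.
elim: l => [|x t IH]; first by apply: ReflectT.
rewrite strict_cons; apply: (iffP andP) => [[h0 /IH h] [|i] /= hi|h].
- exact: h0.
- exact: h.
split; first exact: (h 0%N).
by apply/IH => i hi; exact: (h i.+1).
Qed.

Lemma strict_pos l i : strict l -> (0 < part l i)%N = (i < size l)%N.
Proof.
move=> /strictP h; case: (ltnP i (size l)) => hi.
  by have := h _ hi; case: (part l i).
by rewrite /part nth_default.
Qed.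

Lemma strict_dec l j k : strict l -> (j <= k)%N -> (k < size l)%N ->
  (part l k + (k - j) <= part l j)%N.
Proof.
move=> sl; elim: k => [|k IH] hjk hk; first by move: hjk; rewrite leqn0 => /eqP->; lia.
case: (ltnP j k.+1) => h.
  have := IH h (ltnW hk); have := strictP _ sl k (ltnW hk); lia.
have -> : j = k.+1 by lia.
lia.
Qed.

Lemma containsP l m : reflect (forall i, part m i <= part l i)%N (contains l m).
Proof.
apply: (iffP allP) => [h i|h i _]; last exact: h.
case: (ltnP i (maxn (size l) (size m))) => hi.
  by apply: h; rewrite mem_iota.
by rewrite /part (nth_default _ (leq_trans (leq_maxr _ _) hi)).
Qed.

Lemma mem_boxes l x : (x \in boxes l) = [&& (0 < x.1)%N, (x.1 < x.2)%N & (x.2 <= x.1 + part l x.1.-1)%N].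
Proof.
case: x => a c /=; apply/idP/idP.
  case/flatten_mapP => i; rewrite mem_iota => /andP[_ hi] /mapP [j]; rewrite mem_iota.
  move=> /andP[h1 h2] [-> ->] /=; lia.
case/and3P => ha hac hc.
have hi : (a.-1 < size l)%N.
  rewrite ltnNge; apply/negP => hs; move: hc; rewrite /part nth_default //; lia.
apply/flatten_mapP; exists a.-1; first by rewrite mem_iota.
apply/mapP; exists c; last by rewrite prednK.
rewrite mem_iota; lia.
Qed.

Lemma uniq_flatten_tag (r : seq nat) (f : nat -> seq (nat * nat)) :
  uniq r -> (forall i, uniq (f i)) -> (forall i x, x \in f i -> x.1 = i.+1) ->
  uniq (flatten (map f r)).
Proof.
elim: r => //= i r IH /andP[ir ur] uf tf.
rewrite cat_uniq uf IH // andbT.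
apply/hasPn => x /flatten_mapP [k kr xk]; apply/negP => xi.
have e1 := tf _ _ xk; have e2 := tf _ _ xi.
by move: ir; rewrite -(_ : k = i) ?kr //; move: e1; rewrite e2 => -[].
Qed.

Lemma boxes_uniq l : uniq (boxes l).
Proof.
apply: uniq_flatten_tag; first exact: iota_uniq.
  by move=> i; rewrite map_inj_uniq ?iota_uniq // => x y [].
by move=> i x /mapP [j _ ->].
Qed.

Lemma skew_uniq l m : uniq (skew_boxes l m).
Proof. exact: filter_uniq (boxes_uniq l). Qed.

Lemma mem_skew l m x : (x \in skew_boxes l m) = (x \in boxes l) && (x \notin boxes m).
Proof. by rewrite mem_filter andbC. Qed.

Definition prec (b b' : nat * nat) : bool :=
  (((b.1 == b'.1) && (b.2 < b'.2)%N) || ((b.2 == b'.2) && (b.1 < b'.1)%N)).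

Lemma prec_irr b : prec b b = false.
Proof. by rewrite /prec !ltnn !andbF. Qed.

Lemma stdE s : standard_order s = all (fun x => all (fun y => prec x y ==> (index x s < index y s)%N) s) s.
Proof. by []. Qed.

Lemma std_cons b t : b \notin t ->
  standard_order (b :: t) = ~~ has (prec^~ b) t && standard_order t.
Proof.
move=> bt.
have idx : forall x, x \in t -> index x (b :: t) = (index x t).+1.
  move=> x xt /=; case: eqP => // ebx; by move: bt; rewrite ebx xt.
have inbt : forall x, x \in t -> x \in b :: t by move=> x; rewrite inE orbC => ->.
have i0 : index b (b :: t) = 0%N by rewrite /= eqxx.
rewrite !stdE; apply/idP/idP.
  move/allP => H; apply/andP; split.
    apply/hasPn => x xt; have := allP (H x (inbt _ xt)) b (mem_head _ _).
    by rewrite idx // i0 ltn0 implybF.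
  apply/allP => x xt; apply/allP => y yt.
  by have := allP (H x (inbt _ xt)) y (inbt _ yt); rewrite !idx.
case/andP => /hasPn hn /allP st.
apply/allP => x; rewrite inE => /orP[/eqP->|xt]; apply/allP => y;
  rewrite inE => /orP[/eqP->|yt].
- by rewrite prec_irr.
- by rewrite i0 (idx y yt) implybT.
- by rewrite (negbTE (hn x xt)).
- by rewrite !idx //; have := allP (st x xt) y yt.
Qed.

Lemma count_std_perm s : uniq s -> s != [::] ->
  count standard_order (permutations s) =
  \sum_(b <- s | ~~ has (prec^~ b) s) count standard_order (permutations (rem b s)).
Proof.
move=> us ns.
rewrite (permP (permutationsE _)); last by rewrite lt0n size_eq0.
rewrite count_flatten sumnE big_map big_map undup_id // big_mkcond /=.
rewrite [RHS]big_mkcond /=; apply: eq_big_seq => b bs; rewrite count_map.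
have hs : has (prec^~ b) s = has (prec^~ b) (rem b s).
  by rewrite (perm_has _ (perm_to_rem bs)) /= prec_irr.
rewrite hs.
transitivity (count (fun t => ~~ has (prec^~ b) (rem b s) && standard_order t) (permutations (rem b s))).
  apply: eq_in_count => t; rewrite mem_permutations => pt /=.
  rewrite std_cons; last by rewrite (perm_mem pt) mem_rem_uniqF.
  by rewrite (perm_has _ pt).
by case: (has _ _) => /=; [rewrite count_pred0 | apply: eq_count].
Qed.

Lemma part_incr m i j : part (incr_nth m i) j = ((i == j) + part m j)%N.
Proof. exact: nth_incr_nth. Qed.

Lemma part_def m j : (size m <= j)%N -> part m j = 0%N.
Proof. by move=> h; rewrite /part nth_default. Qed.

Lemma strict_incr m i : strict m ->
  strict (incr_nth m i) = (i <= size m)%N && ((i == 0%N) || ((part m i).+1 < part m i.-1)%N).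
Proof.
move=> sm; have hm := strictP _ sm.
apply/idP/idP => [/strictP h|hc0]; last apply/strictP.
- case: (ltnP i (size m)) => hi /=.
    rewrite (ltnW hi) /=; case: (posnP i) => [->//|ip]; rewrite orbC /=.
    have := h i.-1; rewrite size_incr_nth hi prednK // !part_incr => /(_ (ltnW hi)).
    lia.
  case: (posnP i) => [->|ip]; first by rewrite /=; lia.
  have := h i.-1; rewrite size_incr_nth (ltnNge i (size m)) hi prednK // !part_incr /=.
  move=> /(_ (leqnSn _)).
  rewrite (part_def hi).
  case: (ltnP (size m) i) => h2.
    by rewrite (part_def (m:=m) (j:=i.-1)); lia.
  have -> : i = size m by lia.
  rewrite -(part_def (leqnn (size m))); lia.
- move: hc0 => /andP[hi hc] j.
  rewrite size_incr_nth !part_incr.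
  case: (ltnP i (size m)) => hs hj.
    have := hm j hj; case: (eqVneq i j.+1) => [e|ne].
      by move: hc; rewrite e /=; lia.
    lia.
  have ei : i = size m by lia.
  case: (eqVneq j i) => [ej|nj].
    rewrite ej (part_def (m:=m) (j:=i.+1)); lia.
  case: (eqVneq i j.+1) => [e|ne].
    move: hc; rewrite e (part_def (m:=m) (j:=j.+1)) ?[j.+1.-1]/=; lia.
  have := hm j; lia.
Qed.

Definition bx (m : seq nat) (i : nat) : nat * nat := (i.+1, i.+2 + part m i).

Definition Pbox (l m : seq nat) (i : nat) : bool :=
  strict (incr_nth m i) && contains l (incr_nth m i).

Lemma mem_boxes_incr m i x :
  x \in boxes (incr_nth m i) = (x \in boxes m) || (x == bx m i).
Proof.
case: x => a c; rewrite !mem_boxes part_incr /bx xpair_eqE /=.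
case: (eqVneq i a.-1) => [e|ne]; first by rewrite e; lia.
lia.
Qed.

Lemma min_box_perm l m : strict l -> strict m -> contains l m ->
  perm_eq [seq b <- skew_boxes l m | ~~ has (prec^~ b) (skew_boxes l m)]
          (map (bx m) [seq i <- iota 0 (size m).+1 | Pbox l m i]).
Proof.
move=> sl sm /containsP clm.
have hl := strictP _ sl; have hm := strictP _ sm.
apply: uniq_perm.
- exact: filter_uniq (skew_uniq _ _).
- rewrite map_inj_uniq ?filter_uniq ?iota_uniq //.
  by move=> i j [].
move=> x; rewrite mem_filter; apply/idP/idP.
  case/andP => /hasPn hmin; rewrite mem_skew !mem_boxes.
  case: x hmin => [[|i] c] hmin // /andP[/and3P[_ h1 h2] h3]; rewrite /= in h1 h2 h3.
  have hc : c = (i.+2 + part m i)%N.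
    apply/eqP; rewrite eqn_leq; apply/andP; split; last by lia.
    rewrite leqNgt; apply/negP => hlt.
    have := hmin (i.+1, c.-1); rewrite mem_skew !mem_boxes /= /prec /= eqxx /=.
    move=> /(_ _)/negP; apply; [by lia|by lia].
  have hcol : (i == 0%N) || ((part m i).+1 < part m i.-1)%N.
    case: (posnP i) => [->//|ip]; rewrite /=.
    rewrite ltnNge; apply/negP => hle.
    have li : (i < size l)%N by rewrite -strict_pos //; lia.
    have := hl i.-1; rewrite prednK // => /(_ (ltnW li)) hli.
    have := hmin (i, c); rewrite mem_skew !mem_boxes /= /prec /= eqxx ltnSn /= !orbT.
    move=> /(_ _)/negP; apply; first lia.
    by [].
  have his : (i <= size m)%N.
    rewrite leqNgt; apply/negP => hlt.
    move: hcol; rewrite (part_def (ltnW hlt)) (part_def (m:=m) (j:=i.-1)); lia.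
  apply/mapP; exists i; last by rewrite hc.
  rewrite mem_filter mem_iota ltnS his /Pbox strict_incr // his hcol /=.
  rewrite andbT; apply/containsP => j; rewrite part_incr.
  case: (eqVneq i j) => [<-|ne]; last by rewrite add0n.
  lia.
case/mapP => i; rewrite mem_filter mem_iota /Pbox => /and3P[/andP[si /containsP ci] _ his] ->.
have ci' := ci i; rewrite part_incr eqxx in ci'.
have hcol := si; rewrite strict_incr // in hcol; case/andP: hcol => _ hcol.
apply/andP; split; last first.
  rewrite mem_skew !mem_boxes /=; lia.
apply/hasPn => -[[|j] c']; rewrite mem_skew !mem_boxes /= /prec /= //.
case/andP => /andP[h1 h2] h3.
apply/negP => /orP[/andP[/eqP [ej] hc]|/andP[/eqP ec hj]].
  by move: h3 hc; rewrite ej; lia.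
have ip : (0 < i)%N by lia.
move: hcol; rewrite (negbTE (lt0n_neq0 ip)) /= => hcol.
have sp : (i.-1 < size m)%N by rewrite -strict_pos //; lia.
have hji : (j <= i.-1)%N by lia.
have := strict_dec sm hji sp.
lia.
Qed.

Lemma rem_skew l m i :
  perm_eq (rem (bx m i) (skew_boxes l m)) (skew_boxes l (incr_nth m i)).
Proof.
apply: uniq_perm; [exact: rem_uniq (skew_uniq _ _)|exact: skew_uniq|].
move=> x; rewrite (mem_rem_uniq _ (skew_uniq _ _)) inE !mem_skew mem_boxes_incr.
by case: (x == bx m i); rewrite /= ?orbT ?orbF ?andbF ?andbT // andbC.
Qed.

Lemma sumn_parts l K : (size l <= K)%N -> sumn l = \sum_(i < K) part l i.
Proof.
elim: l K => [|x t IH] K hK; first by rewrite big1 // => i _; rewrite /part nth_nil.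
case: K hK => // K hK; rewrite big_ord_recl /= (IH K hK).
by [].
Qed.

Lemma skew_nil_le l m : skew_boxes l m = [::] -> (psize l <= psize m)%N.
Proof.
move=> e; rewrite /psize !(sumn_parts (K := maxn (size l) (size m))) ?leq_maxl ?leq_maxr //.
apply: leq_sum => i _; rewrite leqNgt; apply/negP => hlt.
have : bx m i \in skew_boxes l m by rewrite mem_skew !mem_boxes /=; lia.
by rewrite e.
Qed.

Lemma nsyt_rec l m : strict l -> strict m -> contains l m -> (psize m < psize l)%N ->
  nsyt l m = (\sum_(i <- iota 0 (size m).+1 | Pbox l m i) nsyt l (incr_nth m i))%N.
Proof.
move=> sl sm clm hlt.
rewrite /nsyt count_std_perm; first last.
- apply/eqP => e; have := skew_nil_le e; lia.
- exact: skew_uniq.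
rewrite -big_filter (perm_big _ (min_box_perm sl sm clm)) big_map big_filter.
apply: eq_bigr => i _.
exact/permP/perm_permutations/rem_skew.
Qed.

Lemma contains_eq l m : strict l -> strict m -> contains l m -> psize l = psize m -> l = m.
Proof.
move=> sl sm /containsP clm e.
set K := maxn (size l) (size m).
have hp : forall i, part l i = part m i.
  move=> i; case: (ltnP i K) => hi; last first.
    by rewrite !part_def //; apply: leq_trans hi; rewrite ?leq_maxl ?leq_maxr.
  have h0 : (\sum_(j < K) (part l j - part m j) == 0)%N.
    rewrite sumnB; last by move=> j _; exact: clm.
    by rewrite -!sumn_parts ?leq_maxl ?leq_maxr // -/(psize l) -/(psize m) e subnn.
  move: h0; rewrite sum_nat_eq0 => /forallP /(_ (Ordinal hi)) /=.
  by have := clm i; lia.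
have hs : size l = size m.
  have h1 := strict_pos (size l) sl; have h2 := strict_pos (size l) sm.
  have h3 := strict_pos (size m) sl; have h4 := strict_pos (size m) sm.
  rewrite hp in h1; rewrite hp in h3; rewrite ltnn in h1; rewrite ltnn in h4.
  have a : ~~ (size l < size m)%N by rewrite -h2 h1.
  have b : ~~ (size m < size l)%N by rewrite -h3 h4.
  lia.
apply: (eq_from_nth (x0 := 0%N) hs) => i _; exact: hp.
Qed.

Lemma strict_all x t : strict (x :: t) -> all (fun y => y < x)%N t.
Proof.
case/andP => h _; move: h; rewrite /= path_sortedE; first by case/andP.
by move=> y a b h1 h2; exact: ltn_trans h2 h1.
Qed.

Lemma strict_all_le t k : strict t -> all (fun y => y <= k)%N t = (part t 0 <= k)%N.
Proof.
case: t => [|x t] //= st; have /allP h := strict_all st.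
case: (leqP x k) => hx /=; last by [].
by apply/allP => y /h hy; lia.
Qed.

Lemma strict_head_pos x t : strict (x :: t) -> (0 < x)%N.
Proof. by move=> s; have := strict_pos 0 s. Qed.

Lemma mem_cons_map (k : nat) (S : seq (seq nat)) x t :
  (x :: t \in map (cons k) S) = (x == k) && (t \in S).
Proof.
case: (eqVneq x k) => [->|ne] /=; first by rewrite mem_map // => a b [].
by apply/mapP => -[t' _ [e _]]; move: ne; rewrite e eqxx.
Qed.

Lemma mem_sp m N l :
  (l \in sp_bounded m N) = [&& strict l, all (fun x => x <= m)%N l & sumn l == N].
Proof.
elim: m N l => [|m IH] N l /=.
  case: l => [|x t]; first by case: N.
  rewrite andbC; case: (boolP (strict (x :: t))) => [s|]; last by rewrite !andbF; case: (N == 0%N).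
  have := strict_head_pos s; rewrite !andbT /=; case: x s => // x s _.
  by case: (N == 0%N).
rewrite mem_cat IH.
have nilB : forall k (S : seq (seq nat)), ([::] \in map (cons k) S) = false.
  by move=> k S; apply/negP => /mapP [x _ e].
case: l => [|x t]; first by case: (m.+1 <= N)%N; rewrite ?nilB ?in_nil orbF.
case: (boolP (strict (x :: t))) => [s|ns]; last first.
  rewrite /=; case: (m.+1 <= N)%N; rewrite ?in_nil // mem_cons_map IH.
  apply/negP => /andP[/eqP ex /and3P[st ha _]]; move: ns; rewrite strict_cons st andbT.
  rewrite (strict_all_le _ st) in ha; lia.
rewrite !(strict_all_le _ s) /=.
have st : strict t by move: s; rewrite strict_cons => /andP[].
have hp : (part t 0 < x)%N by move: s; rewrite strict_cons => /andP[].
case: (leqP x m) => hx /=.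
  rewrite (_ : (x <= m.+1)%N = true); last by lia.
  case: (m.+1 <= N)%N; rewrite ?in_nil ?mem_cons_map ?orbF //.
  by rewrite (_ : (x == m.+1) = false) ?orbF //; lia.
case: (ifP _) => hN; last first.
  rewrite in_nil; apply/esym/negP => /andP[_ /eqP]; lia.
rewrite mem_cons_map IH st (strict_all_le _ st). 
lia.
Qed.

Lemma sp_uniq m N : uniq (sp_bounded m N).
Proof.
elim: m N => [|m IH] N /=; first by case: (N == 0%N).
rewrite cat_uniq IH /=.
case: (m.+1 <= N)%N => //=; rewrite map_inj_uniq ?IH ?andbT; last by move=> a b [].
apply/hasPn => l /mapP [t _ ->]; rewrite mem_sp /= ltnn.
by rewrite andbF.
Qed.

Lemma mem_strict_parts N l : (l \in strict_parts N) = strict l && (psize l == N).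
Proof.
rewrite /strict_parts mem_sp; case: (boolP (strict l)) => //= sl.
rewrite /psize; case: (eqVneq (sumn l) N) => [<-|]; rewrite ?andbF ?andbT //.
apply/allP => x xl; move: xl; elim: l {sl} => // y t IHt; rewrite inE => /orP[/eqP->|/IHt]; simpl; lia.
Qed.

Local Open Scope ring_scope.

Lemma iter_binom (A : (seq nat -> C) -> seq nat -> C) (c : C) :
  (forall (r : seq nat) (a : nat -> C) (h : nat -> seq nat -> C) l,
      A (fun x => \sum_(k <- r) a k * h k x) l = \sum_(k <- r) a k * A (h k) l) ->
  forall n g l, iter n (fun h x => A h x + c * h x) g l =
     \sum_(0 <= k < n.+1) ('C(n, k))%:R * c ^+ (n - k) * iter k A g l.
Proof.
move=> Alin; elim=> [|n IH] g l.
  by rewrite big_nat1 /= bin0 expr0 !mul1r.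
rewrite iterS.
have -> : iter n (fun h x => A h x + c * h x) g =
   (fun x => \sum_(0 <= k < n.+1) ('C(n, k))%:R * c ^+ (n - k) * iter k A g x).
  by apply: functional_extensionality => x; exact: IH.
rewrite Alin.
pose D k := iter k A g l.
have eD : forall k, A (iter k A g) l = D k.+1 by [].
have eD0 : forall k, iter k A g l = D k by [].
under eq_bigr do rewrite eD.
under [X in _ + c * X]eq_bigr do rewrite eD0.
under [RHS]eq_bigr do rewrite eD0.
set S1 := \sum_(0 <= k < n.+1) _.
have e1 : c * \sum_(0 <= k < n.+1) 'C(n, k)%:R * c ^+ (n - k) * D k =
   c ^+ n.+1 * D 0%N + \sum_(0 <= i < n) 'C(n, i.+1)%:R * c ^+ (n - i) * D i.+1.
  rewrite (big_nat_recl n) // bin0 subn0 mulrDr exprS mul1r mulrA; congr (_ + _).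
  rewrite mulr_sumr big_nat_cond [RHS]big_nat_cond; apply: eq_bigr => i /andP[/andP[_ hi] _].
  rewrite subnS -[(n - i)%N]prednK ?subn_gt0 // exprS /=; ring.
have e3 : \sum_(0 <= i < n.+1) 'C(n, i.+1)%:R * c ^+ (n - i) * D i.+1 =
          \sum_(0 <= i < n) 'C(n, i.+1)%:R * c ^+ (n - i) * D i.+1.
  by rewrite big_nat_recr //= bin_small // mul0r mul0r addr0.
have e2 : \sum_(0 <= k < n.+2) 'C(n.+1, k)%:R * c ^+ (n.+1 - k) * D k =
   c ^+ n.+1 * D 0%N + \sum_(0 <= i < n.+1) 'C(n, i.+1)%:R * c ^+ (n - i) * D i.+1 + S1.
  rewrite (big_nat_recl n.+1) // bin0 subn0 mul1r -addrA; congr (_ + _).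
  rewrite -big_split /=; apply: eq_bigr => i _.
  by rewrite binS natrD subSS !mulrDl.
rewrite e1 e2 e3; ring.
Qed.

Definition Tw (l l' : seq nat) : C := if (size l < size l')%N then 1 else 2%:R.
Definition Top (g : seq nat -> C) (l : seq nat) : C :=
  \sum_(l' <- add_box l) Tw l l' * g l'.

Lemma size_add_box l l' : l' \in add_box l -> (size l <= size l')%N.
Proof.
rewrite mem_filter => /andP[_ /mapP [i _ ->]]; rewrite size_incr_nth.
by case: ifP => // h; rewrite leqW // leqNgt h.
Qed.

Lemma Dop_T g l : Dop g l = Top g l - g l.
Proof.
rewrite /Dop /Top [in RHS](bigID (fun l' => (size l < size l')%N)) /=; congr (_ + _ - _).
  by apply: eq_bigr => l' h; rewrite /Tw h mul1r.
rewrite mulr_sumr big_seq_cond [RHS]big_seq_cond; apply: eq_big => l'.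
  case: (boolP (l' \in add_box l)) => //= /size_add_box h; by rewrite eqn_leq h andbT leqNgt.
by case/andP => _ /eqP h; rewrite /Tw h ltnn.
Qed.

Lemma Top_lin (r : seq nat) (a : nat -> C) (h : nat -> seq nat -> C) l :
  Top (fun x => \sum_(k <- r) a k * h k x) l = \sum_(k <- r) a k * Top (h k) l.
Proof.
rewrite /Top; under eq_bigr do rewrite mulr_sumr.
rewrite exchange_big; apply: eq_bigr => k _; rewrite mulr_sumr.
by apply: eq_bigr => l' _; rewrite mulrCA.
Qed.

Lemma Dop_lin (r : seq nat) (a : nat -> C) (h : nat -> seq nat -> C) l :
  Dop (fun x => \sum_(k <- r) a k * h k x) l = \sum_(k <- r) a k * Dop (h k) l.
Proof.
rewrite Dop_T Top_lin; under [RHS]eq_bigr do rewrite Dop_T mulrBr.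
by rewrite sumrB.
Qed.

Lemma Top_eq : (fun h x => Dop h x + 1 * h x) = Top.
Proof.
apply: functional_extensionality => h; apply: functional_extensionality => x.
by rewrite Dop_T mul1r subrK.
Qed.

Lemma Dop_eq : (fun h x => Top h x + (-1) * h x) = Dop.
Proof.
apply: functional_extensionality => h; apply: functional_extensionality => x.
by rewrite Dop_T mulN1r.
Qed.

Lemma sumn_incr l i : sumn (incr_nth l i) = (sumn l).+1.
Proof.
elim: l i => [|x t IH] [|i] //=; first by elim: i => //= i ->.
- by rewrite IH addnS.
Qed.

Lemma single_uniq (T : eqType) (s : seq T) a :
  uniq s -> (forall x, x \in s -> x = a) -> a \in s -> s = [:: a].
Proof.
case: s => [|x [|y t]] //= us h _; first by rewrite (h x (mem_head _ _)).
move: us; rewrite (h x) ?inE ?eqxx // (h y) ?inE ?eqxx ?orbT //.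
Qed.

Lemma contains_refl m : contains m m.
Proof. by apply/containsP. Qed.

Lemma contains_incr m i : contains (incr_nth m i) m.
Proof. by apply/containsP => j; rewrite part_incr leq_addl. Qed.

Lemma contains_trans l m k : contains l m -> contains m k -> contains l k.
Proof.
move=> /containsP h1 /containsP h2; apply/containsP => j.
exact: leq_trans (h2 j) (h1 j).
Qed.

Lemma skew_self m : skew_boxes m m = [::].
Proof.
apply/eqP; rewrite -[_ == _]negbK -has_filter; apply/hasPn => x hx.
by rewrite hx.
Qed.

Lemma Ssum0 g m : strict m -> Ssum g m 0 = g m.
Proof.
move=> sm; rewrite /Ssum addn0 -big_filter.
have -> : [seq l <- strict_parts (psize m) | contains l m] = [:: m].
  apply: single_uniq.
  - exact: filter_uniq (sp_uniq _ _).
  - move=> x; rewrite mem_filter mem_strict_parts => /andP[cx /andP[sx /eqP px]].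
    exact: contains_eq.
  - by rewrite mem_filter mem_strict_parts sm eqxx contains_refl.
rewrite big_seq1 /nsyt skew_self.
have -> : weight m m = 0 by rewrite /weight; lia.
by rewrite expr0z /= !mul1r.
Qed.

Lemma pow_weight l m i : strict m -> strict (incr_nth m i) ->
  (2%:R : C) ^ (weight l m) = Tw m (incr_nth m i) * (2%:R : C) ^ (weight l (incr_nth m i)).
Proof.
move=> sm si.
have u2 : (2%:R : C) \is a GRing.unit by rewrite unitfE pnatr_eq0.
have -> : weight l m = weight l (incr_nth m i) + weight (incr_nth m i) m.
  by rewrite /weight; ring.
rewrite exprzDr // mulrC; congr (_ * _).
move: si; rewrite strict_incr // => /andP[hi _].
rewrite /Tw /weight /psize /plen sumn_incr size_incr_nth.
case: (ltnP i (size m)) => h.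
  rewrite ltnn (_ : _ - _ - _ + _ = 1%:Z); first by rewrite expr1z.
  lia.
have -> : i = size m by lia.
rewrite ltnSn (_ : _ - _ - _ + _ = 0%:Z); first by rewrite expr0z.
lia.
Qed.

Lemma Ssum_iter g n : forall m, strict m -> Ssum g m n = iter n Top g m.
Proof.
elim: n => [|n IH] m sm; first exact: Ssum0.
rewrite iterS /Top /add_box big_filter big_map big_mkcond /=.
rewrite /Ssum big_seq_cond.
under eq_bigr => l /andP[lP clm].
  move: lP; rewrite mem_strict_parts => /andP[sl /eqP pl].
  rewrite (nsyt_rec sl sm clm); last by rewrite pl; lia.
  rewrite natr_sum mulr_sumr mulr_suml big_mkcond /=.
  over.
rewrite exchange_big /=; apply: eq_bigr => i _.
case: (boolP (strict (incr_nth m i))) => si; last first.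
  by apply: big1 => l _; rewrite /Pbox (negbTE si).
rewrite -(IH _ si) /Ssum mulr_sumr.
have -> : (psize (incr_nth m i) + n = psize m + n.+1)%N by rewrite /psize sumn_incr; lia.
rewrite -big_mkcondr [RHS]big_seq_cond; apply: eq_big => l.
  rewrite /Pbox si /=; case: (l \in _) => //=.
  case: (boolP (contains l (incr_nth m i))) => h; rewrite ?andbT ?andbF //.
  exact: contains_trans h (contains_incr _ _).
case/andP => /andP[_ _] _.
by rewrite (pow_weight l sm si) !mulrA.
Qed.

Lemma Dop_zero h : (forall l, strict l -> h l = 0) -> forall l, strict l -> Dop h l = 0.
Proof.
move=> hz l sl; rewrite /Dop hz // subr0.
rewrite !big1_seq ?mulr0 ?addr0 // => l' /andP[_]; rewrite mem_filter => /andP[s _];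
  exact: hz.
Qed.

Lemma Dpow_zero g r : (forall l, strict l -> Dpow r g l = 0) ->
  forall k l, (r <= k)%N -> strict l -> Dpow k g l = 0.
Proof.
move=> hr k l hk sl; rewrite /Dpow -(subnK hk) iterD.
move: l sl; elim: (k - r)%N => [|j IH] l sl //=; first exact: hr.
exact: Dop_zero.
Qed.

Lemma prod_ffact (n k : nat) :
  \prod_(j <- iota 0 k) (n%:R - j%:R : C) = (n ^_ k)%:R.
Proof.
elim: k => [|k IH]; first by rewrite big_nil.
rewrite ffactnSr natrM -addn1 iotaD big_cat big_seq1 IH add0n.
case: (leqP k n) => h; first by rewrite natrB.
by rewrite ffact_small //= !mul0r.
Qed.

Lemma sum_trunc (F : nat -> C) a b :
  (forall k, (a <= k)%N -> F k = 0) -> (forall k, (b <= k)%N -> F k = 0) ->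
  \sum_(0 <= k < a) F k = \sum_(0 <= k < b) F k.
Proof.
move=> ha hb.
have H : forall c, (c <= a + b)%N -> (forall k, (c <= k)%N -> F k = 0) ->
    \sum_(0 <= k < a + b) F k = \sum_(0 <= k < c) F k.
  move=> c hc hz; rewrite (big_cat_nat _ (n := c)) //= [X in _ + X]big_nat_cond.
  rewrite [X in _ + X = _]big1 ?addr0 // => k /andP[/andP[h _] _]; exact: hz.
by rewrite -(H a) ?leq_addr // -(H b) ?leq_addl.
Qed.

Lemma part1 (g : seq nat -> C) (mu : seq nat) (Hmu : strict mu) (n : nat) :
  Ssum g mu n = \sum_(0 <= k < n.+1) ('C(n, k))%:R * Dpow k g mu.
Proof.
rewrite Ssum_iter // -Top_eq (@iter_binom Dop 1 Dop_lin).
by apply: eq_bigr => k _; rewrite expr1n mulr1.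
Qed.

Lemma part2 (g : seq nat -> C) (mu : seq nat) (Hmu : strict mu) (n : nat) :
  Dpow n g mu = \sum_(0 <= k < n.+1)
                     (-1) ^+ (n + k) * ('C(n, k))%:R * Ssum g mu k.
Proof.
rewrite /Dpow -Dop_eq (@iter_binom Top (-1) Top_lin) big_nat_cond [RHS]big_nat_cond.
apply: eq_bigr => k /andP[/andP[_ hk] _].
rewrite Ssum_iter // -signr_odd -[(-1) ^+ (n - k)]signr_odd oddD oddB //.
by rewrite [_ * (-1) ^+ _]mulrC.
Qed.

Unset Implicit Arguments.

Theorem theorem2p3 (g : seq nat -> C) (mu : seq nat) (Hmu : strict mu) :
  (forall n : nat,
     Ssum g mu n = \sum_(0 <= k < n.+1) ('C(n, k))%:R * Dpow k g mu
     /\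
     Dpow n g mu = \sum_(0 <= k < n.+1)
                     (-1) ^+ (n + k) * ('C(n, k))%:R * Ssum g mu k)
  /\
  (forall r : nat, (0 < r)%N ->
     (forall l : seq nat, strict l -> Dpow r g l = 0) ->
     exists p : {poly C}, (size p <= r)%N /\ forall n : nat, Ssum g mu n = p.[n%:R]).
Proof.
split; first by move=> n; split; [exact: part1 | exact: part2].
move=> r r0 hr.
pose P (k : nat) : {poly C} := \prod_(j <- iota 0 k) ('X - (j%:R : C)%:P).
pose p := \sum_(0 <= k < r) (Dpow k g mu / (k`!)%:R) *: P k.
exists p; split.
  rewrite /p big_nat_cond; apply: (big_ind (fun q : {poly C} => (size q <= r)%N)).
  - by rewrite size_poly0.
  - move=> x y hx hy; apply: leq_trans (size_polyD _ _) _; by rewrite geq_max hx hy.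
  - move=> k /andP[/andP[_ hk] _]; apply: leq_trans (size_scale_leq _ _) _.
    by rewrite /P size_prod_XsubC size_iota.
move=> n; rewrite part1 // /p horner_sum.
under [RHS]eq_bigr => k _.
  rewrite hornerZ /P horner_prod.
  under eq_bigr do rewrite hornerXsubC.
  rewrite prod_ffact -bin_ffact natrM mulrCA divfK; last by rewrite pnatr_eq0 -lt0n fact_gt0.
  over.
apply: sum_trunc => k hk.
- by rewrite bin_small // mul0r.
- by rewrite (Dpow_zero hr) // mulr0.
Qed.
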